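(* Let $q$ be a prime power, $m\ge1$, let $g_1,\dots,g_n\in\mathbb{F}_{q^m}$ be linearly independent over $\mathbb{F}_q$ and $r_1,\dots,r_n\in\mathbb{F}_{q^m}$. Define $\Pi_1(x):=x^q-g_1^{q-1}x$, $\Lambda_1(x):=\frac{r_1}{g_1}x$, and for $i=1,\dots,n-1$ $$\Pi_{i+1}(x):=\big(x^q-\Pi_i(g_{i+1})^{q-1}x\big)\circ\Pi_i(x),\qquad \Lambda_{i+1}(x):=\Lambda_i(x)-\frac{\Lambda_i(g_{i+1})-r_{i+1}}{\Pi_i(g_{i+1})}\Pi_i(x).$$ Then $\Pi_i(x)=\Pi_{\langle g_1,\dots,g_i\rangle}(x)$ and $\Lambda_i(x)=\Lambda_{(g_1,\dots,g_i),(r_1,\dots,r_i)}(x)$ for $i=1,\dots,n$.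
   Context: Write $[i]:=q^i$. $\langle\cdot\rangle$ denotes $\mathbb{F}_q$-linear span. For an $\mathbb{F}_q$-subspace $U\subseteq\mathbb{F}_{q^m}$, $\Pi_U(x)=\prod_{u\in U}(x-u)$ is the $q$-annihilator polynomial. For $\mathbb{F}_q$-linearly independent $h_1,\dots,h_s\in\mathbb{F}_{q^m}$ and $\mathbf h=(h_1,\dots,h_s)$, $\boldsymbol\rho=(\rho_1,\dots,\rho_s)\in\mathbb{F}_{q^m}^s$, the $q$-Lagrange polynomial is $\Lambda_{\mathbf h,\boldsymbol\rho}(x)=\sum_{i=1}^s(-1)^{s-i}\rho_i\det(\mathfrak D_i(\mathbf h,x))/\det(M_s(h_1,\dots,h_s))$, where $M_s(v_1,\dots,v_t)$ is the $s\times t$ matrix with $(j,l)$ entry $v_l^{[j-1]}$ and $\mathfrak D_i(\mathbf h,x)$ is $M_s(h_1,\dots,h_s,x)$ with its $i$-th column removed. *)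

(* Defs.v *)
From HB Require Import structures.
From mathcomp Require Import all_boot all_order all_algebra all_field.
Set Implicit Arguments. Unset Strict Implicit. Unset Printing Implicit Defensive.
Import GRing.Theory.
Local Open Scope ring_scope.

Section Defs.
Variables (L : finFieldType) (q : nat).

(* F_q is realised inside L (|L| = q^m) as the set of x with x^q = x. *)
Definition Fq_lin_indep (s : nat) (h : 'I_s -> L) : Prop :=
  forall c : 'I_s -> L, (forall j, c j ^+ q = c j) ->
    \sum_(j < s) c j * h j = 0 -> forall j, c j = 0.

Definition Fq_span (s : nat) (h : 'I_s -> L) : {set L} :=
  [set x | [exists c : {ffun 'I_s -> L},
     [forall j, c j ^+ q == c j] && (x == \sum_(j < s) c j * h j)]].

Definition annihilator (U : {set L}) : {poly L} :=
  \prod_(u in U) ('X - u%:P).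

Definition Mq (s : nat) (h : 'I_s -> L) : 'M[L]_s :=
  \matrix_(j < s, l < s) h l ^+ (q ^ j).

Definition Mqx (s : nat) (h : 'I_s -> L) : 'M[{poly L}]_(s, s.+1) :=
  \matrix_(j < s, l < s.+1)
     (if unlift ord_max l is Some l' then (h l' ^+ (q ^ j))%:P
      else 'X ^+ (q ^ j)).

Definition Dq (s : nat) (h : 'I_s -> L) (i : 'I_s) : 'M[{poly L}]_s :=
  col' (widen_ord (leqnSn s) i) (Mqx h).

(* q-Lagrange polynomial; i is 0-based, so (-1)^{s-i} becomes (-1)^{s-(i+1)} *)
Definition qLagrange (s : nat) (h rho : 'I_s -> L) : {poly L} :=
  \sum_(i < s) ((-1) ^+ (s - i.+1) * rho i / \det (Mq h))%:P * \det (Dq h i).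

(* Recursive polynomials; g, r : nat -> L are used with 1-based indices g 1, ..., g n.
   PiS k = Pi_{k+1}, LamS k = Lambda_{k+1}. *)
Fixpoint PiS (g : nat -> L) (k : nat) : {poly L} :=
  match k with
  | 0 => 'X ^+ q - (g 1 ^+ (q - 1))%:P * 'X
  | k'.+1 => ('X ^+ q - (((PiS g k').[g k.+1]) ^+ (q - 1))%:P * 'X) \Po PiS g k'
  end.

Fixpoint LamS (g r : nat -> L) (k : nat) : {poly L} :=
  match k with
  | 0 => (r 1 / g 1)%:P * 'X
  | k'.+1 => LamS g r k' -
      (((LamS g r k').[g k.+1] - r k.+1) / (PiS g k').[g k.+1])%:P * PiS g k'
  end.

Definition PiRec (g : nat -> L) (i : nat) := PiS g i.-1.
Definition LamRec (g r : nat -> L) (i : nat) := LamS g r i.-1.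

End Defs.

(* Main.v *)
Require Import Defs.
From HB Require Import structures.
From mathcomp Require Import all_boot all_order all_algebra all_field.
From mathcomp Require Import ring zify.
Set Implicit Arguments. Unset Strict Implicit. Unset Printing Implicit Defensive.
Import GRing.Theory.
Local Open Scope ring_scope.

Section Main.
Variables (L : finFieldType) (q : nat).
Hypothesis q_gt1 : (1 < q)%N.
Hypothesis frobD : forall x y : L, (x + y) ^+ q = x ^+ q + y ^+ q.
Hypothesis cardFq : #|[set x : L | x ^+ q == x]| = q.

Definition qlin (f : L -> L) :=
  (forall x y, f (x + y) = f x + f y) /\
  (forall c x, c ^+ q = c -> f (c * x) = c * f x).

Lemma q_gt0 : (0 < q)%N. Proof. by apply: ltnW. Qed.

Lemma frob0 : (0 : L) ^+ q = 0.
Proof. by rewrite expr0n; case: q q_gt1. Qed.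

Lemma frobB (x y : L) : (x - y) ^+ q = x ^+ q - y ^+ q.
Proof. by rewrite -[in RHS](subrK y x) (frobD (x - y) y) addrK. Qed.

Lemma frobN1 : (-1 : L) ^+ q = -1.
Proof. by rewrite -sub0r frobB frob0 expr1n sub0r. Qed.

Lemma frobnD n (x y : L) : (x + y) ^+ (q ^ n) = x ^+ (q ^ n) + y ^+ (q ^ n).
Proof. elim: n => [|n IH]; first by rewrite !expr1. by rewrite expnSr !exprM IH frobD. Qed.

Lemma frobn_fix n (c : L) : c ^+ q = c -> c ^+ (q ^ n) = c.
Proof. move=> hc; elim: n => [|n IH]; first by rewrite expr1. by rewrite expnSr exprM IH. Qed.

Lemma qlin0 f : qlin f -> f 0 = 0.
Proof.
case=> hD _; have := hD 0 0; rewrite addr0 => H.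
by apply: (addrI (f 0)); rewrite addr0 -H.
Qed.

Lemma qlin_sum f (I : finType) (c : I -> L) (x : I -> L) : qlin f ->
  (forall i, c i ^+ q = c i) -> f (\sum_i c i * x i) = \sum_i c i * f (x i).
Proof.
move=> hf hc; rewrite (big_morph f hf.1 (qlin0 hf)).
by apply: eq_bigr => i _; rewrite hf.2.
Qed.

Lemma qlin_lin (s : nat) (a : nat -> L) :
  qlin (fun x => \sum_(r < s) a r * x ^+ (q ^ r)).
Proof.
split=> [x y|c x hc].
  by rewrite -big_split; apply: eq_bigr => r _; rewrite frobnD mulrDr.
rewrite mulr_sumr; apply: eq_bigr => r _.
by rewrite exprMn (frobn_fix _ hc) mulrCA.
Qed.

Lemma qlin_ext f g : (forall x, f x = g x) -> qlin g -> qlin f.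
Proof.
move=> e [g1 g2]; split=> [x y|c x hc]; first by rewrite !e g1.
by rewrite !e g2.
Qed.

Lemma qlin_comp f g : qlin f -> qlin g -> qlin (fun x => f (g x)).
Proof.
move=> [f1 f2] [g1 g2]; split=> [x y|c x hc]; first by rewrite g1 f1.
by rewrite g2 // f2.
Qed.

Lemma qlinB f g : qlin f -> qlin g -> qlin (fun x => f x - g x).
Proof.
move=> [f1 f2] [g1 g2]; split=> [x y|c x hc].
  by rewrite f1 g1 opprD addrACA.
by rewrite f2 // g2 // mulrBr.
Qed.

Lemma qlinZ a f : qlin f -> qlin (fun x => a * f x).
Proof.
move=> [f1 f2]; split=> [x y|c x hc]; first by rewrite f1 mulrDr.
by rewrite f2 // mulrCA.
Qed.

Lemma qlin_frob : qlin (fun x => x ^+ q).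
Proof. split=> [x y|c x hc]; first exact: frobD. by rewrite exprMn hc. Qed.

Lemma qlin_id : qlin id.
Proof. by split. Qed.

Lemma span_root s (h : 'I_s -> L) (f : L -> L) x : qlin f ->
  (forall j, f (h j) = 0) -> x \in Fq_span q h -> f x = 0.
Proof.
move=> hf h0; rewrite inE => /existsP[c /andP[/forallP hc /eqP ->]].
rewrite qlin_sum //; last by move=> i; apply/eqP.
by apply: big1 => i _; rewrite h0 mulr0.
Qed.

Lemma card_span s (h : 'I_s -> L) : Fq_lin_indep q h -> #|Fq_span q h| = (q ^ s)%N.
Proof.
move=> hind.
pose A := [set c : {ffun 'I_s -> L} | [forall j, c j ^+ q == c j]].
pose F := fun c : {ffun 'I_s -> L} => \sum_(j < s) c j * h j.
have -> : Fq_span q h = F @: A.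
  apply/setP => x; rewrite inE; apply/existsP/imsetP.
    by case=> c /andP[hc /eqP ->]; exists c; rewrite ?inE.
  by case=> c; rewrite inE => hc ->; exists c; rewrite hc eqxx.
rewrite card_in_imset.
  have -> : #|A| = #|@ffun_on_mem 'I_s _ (mem [set x : L | x ^+ q == x])|.
    apply: eq_card => c; rewrite inE; apply/forallP/ffun_onP => H j; move: (H j);
    by rewrite inE.
  by rewrite card_ffun_on cardFq card_ord.
move=> c c'; rewrite !inE => /forallP hc /forallP hc' he.
apply/ffunP => j; apply/eqP; rewrite -subr_eq0; apply/eqP.
apply: (hind (fun j => c j - c' j)) => [i|].
  by rewrite frobB (eqP (hc i)) (eqP (hc' i)).
rewrite /F in he.
under eq_bigr do rewrite mulrBl.
by rewrite sumrB he subrr.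
Qed.

Lemma vanish s (h : 'I_s.+1 -> L) (P : {poly L}) : Fq_lin_indep q h ->
  qlin (horner P) -> (size P <= (q ^ s).+1)%N -> (forall j, P.[h j] = 0) -> P = 0.
Proof.
move=> hind hP hs h0; apply/eqP; apply: contraT => nz.
have := max_poly_roots nz (rs := enum (Fq_span q h)).
rewrite enum_uniq -cardE card_span //.
have -> : all (root P) (enum (Fq_span q h)).
  by apply/allP => x; rewrite mem_enum => hx; apply/rootP; apply: (span_root hP).
move=> /(_ isT isT) H.
have := leq_trans H hs; rewrite ltnS leqNgt ltn_exp2l ?ltnSn //; by case: (q) q_gt1.
Qed.


Definition linP (s : nat) (a : nat -> L) : {poly L} :=
  \sum_(r < s) (a r)%:P * 'X^(q ^ r).

Lemma linP_eval s a x : (linP s a).[x] = \sum_(r < s) a r * x ^+ (q ^ r).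
Proof.
rewrite /linP horner_sum; apply: eq_bigr => r _.
by rewrite hornerCM hornerXn.
Qed.

Lemma linP_qlin s a : qlin (horner (linP s a)).
Proof.
apply: (qlin_ext (g := fun x => \sum_(r < s) a r * x ^+ (q ^ r))).
  by move=> x; rewrite linP_eval.
exact: qlin_lin.
Qed.

Lemma linP_size s a : (size (linP s.+1 a) <= (q ^ s).+1)%N.
Proof.
rewrite /linP; apply: (big_ind (fun p : {poly L} => (size p <= (q ^ s).+1)%N)).
- by rewrite size_poly0.
- by move=> p1 p2 h1 h2; apply: leq_trans (size_polyD _ _) _; rewrite geq_max h1 h2.
move=> r _; rewrite mul_polyC; apply: leq_trans (size_scale_leq _ _) _.
rewrite size_polyXn ltnS leq_exp2l //; by rewrite -ltnS.
Qed.

Lemma annihilatorE s (h : 'I_s -> L) (P : {poly L}) : Fq_lin_indep q h ->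
  P \is monic -> size P = (q ^ s).+1 -> qlin (horner P) ->
  (forall j, P.[h j] = 0) -> P = annihilator (Fq_span q h).
Proof.
move=> hind mP sP hP h0.
rewrite /annihilator -big_enum.
have [Q hQ] : exists Q, P = Q * \prod_(z <- enum (Fq_span q h)) ('X - z%:P).
  apply: uniq_roots_prod_XsubC; last by rewrite uniq_rootsE enum_uniq.
  by apply/allP => x; rewrite mem_enum => hx; apply/rootP; apply: (span_root hP).
apply/eqP; rewrite -eqp_monic ?monic_prod_XsubC // eqp_sym.
rewrite -dvdp_size_eqp; last by rewrite hQ dvdp_mull.
by rewrite size_prod_XsubC -cardE card_span // sP.
Qed.


Lemma detMq_neq0 s (h : 'I_s -> L) : Fq_lin_indep q h -> \det (Mq q h) != 0.
Proof.
case: s h => [|s] h hind; first by rewrite det_mx00 oner_eq0.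
apply/det0P => -[v nzv vM].
pose P := linP s.+1 (fun r => v 0 (inord r)).
have P0 : P = 0.
  apply: (vanish hind (linP_qlin _ _) (linP_size _ _)) => l.
  rewrite linP_eval.
  transitivity ((v *m Mq q h) 0 l); last by rewrite vM mxE.
  by rewrite mxE; apply: eq_bigr => r _; rewrite inord_val mxE.
case/eqP: nzv; apply/matrixP => i j; rewrite ord1 mxE.
have := congr1 (fun p : {poly L} => p`_(q ^ j)) P0; rewrite coef0 /P /linP coef_sum.
rewrite (bigD1 j) //= big1 ?addr0.
  by rewrite coefCM coefXn eqxx mulr1 inord_val.
move=> r hr; rewrite coefCM coefXn eqn_exp2l //.
case: eqP => [/val_inj e|_]; [by rewrite e eqxx in hr | by rewrite mulr0].
Qed.

Lemma detDq s (h : 'I_s.+1 -> L) (i : 'I_s.+1) :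
  \det (Dq q h i) = \sum_(r < s.+1)
     ((-1) ^+ (s - i) * cofactor (Mq q h) r i)%:P * 'X^(q ^ r).
Proof.
rewrite (expand_det_col _ ord_max); apply: eq_bigr => r _.
have e1 : lift (widen_ord (leqnSn s.+1) i) ord_max = ord_max.
  apply: val_inj; rewrite /= /bump; have := ltn_ord i; lia.
have e2 : col' ord_max (Dq q h i) = map_mx polyC (col' i (Mq q h)).
  apply/matrixP => a b; rewrite !mxE.
  have -> : lift (widen_ord (leqnSn s.+1) i) (lift ord_max b) = lift ord_max (lift i b).
    apply: val_inj; rewrite /= /bump; have := ltn_ord i; have := ltn_ord b; lia.
  by rewrite liftK.
rewrite {1}/Dq !mxE e1 unlift_none /cofactor e2 -map_row' det_map_mx.
rewrite mulrC; congr (_ * _).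
rewrite rmorphM /= rmorphM /= mulrA -rmorphM /= -exprD.
have -> : (s - i + (r + i) = r + s)%N by have := ltn_ord i; lia.
by rewrite rmorphXn rmorphN rmorph1.
Qed.


Lemma sign2 n : (-1) ^+ n * (-1) ^+ n = 1 :> L.
Proof. by rewrite -exprD addnn -mul2n exprM expr2 mulN1r opprK expr1n. Qed.

Definition lagc s (h rho : 'I_s.+1 -> L) (r : nat) : L :=
  \sum_(i < s.+1) rho i / \det (Mq q h) * cofactor (Mq q h) (inord r) i.

Lemma qLagrangeE s (h rho : 'I_s.+1 -> L) :
  qLagrange q h rho = linP s.+1 (lagc h rho).
Proof.
rewrite /qLagrange /linP.
under eq_bigr do rewrite detDq mulr_sumr.
rewrite exchange_big; apply: eq_bigr => r _.
rewrite /lagc rmorph_sum mulr_suml; apply: eq_bigr => i _.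
rewrite mulrA -rmorphM /= inord_val subSS; congr (_%:P * _).
set t := (-1) ^+ (s - i).
transitivity (t * t * (rho i / \det (Mq q h) * cofactor (Mq q h) r i)); first by ring.
by rewrite sign2 mul1r.
Qed.

Lemma qLagrange_val s (h rho : 'I_s.+1 -> L) k : Fq_lin_indep q h ->
  (qLagrange q h rho).[h k] = rho k.
Proof.
move=> hind; have nz := detMq_neq0 hind.
rewrite qLagrangeE linP_eval /lagc.
under eq_bigr do rewrite mulr_suml.
rewrite exchange_big /=.
transitivity (\sum_(i < s.+1) rho i / \det (Mq q h) * (\adj (Mq q h) *m Mq q h) i k).
  apply: eq_bigr => i _; rewrite mxE mulr_sumr; apply: eq_bigr => r _.
  by rewrite !mxE inord_val -mulrA.
rewrite mul_adj_mx (bigD1 k) //= big1 ?addr0.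
  by rewrite mxE eqxx mulr1n divfK.
by move=> i hi; rewrite mxE (negbTE hi) mulr0n mulr0.
Qed.


Section Rec.
Variables (g r : nat -> L) (n : nat).
Hypothesis hindn : Fq_lin_indep q (fun j : 'I_n => g j.+1).

Lemma indep_prefix i : (i <= n)%N -> Fq_lin_indep q (fun j : 'I_i => g j.+1).
Proof.
move=> hi c hc hs j.
pose F (j : nat) := (if @insub _ _ 'I_i j is Some j' then c j' else 0) * g j.+1.
have hc' : forall j : 'I_n, (if @insub _ _ 'I_i j is Some j' then c j' else 0) ^+ q =
                  (if @insub _ _ 'I_i j is Some j' then c j' else 0).
  by move=> j'; case: insub => [a|]; [exact: hc | exact: frob0].
have := hindn hc' _ (widen_ord hi j); rewrite /= valK; apply.
transitivity (\sum_(j < n) F j); first by [].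
transitivity (\sum_(j < i) F j); last first.
  by rewrite -[RHS]hs; apply: eq_big => // a _; rewrite /F valK.

rewrite (@big_ord_widen _ _ _ i n F hi) [RHS]big_mkcond; apply: eq_bigr => a _.
by case: ifP => // ha; rewrite /F insubF // mul0r.
Qed.

Lemma PiS_evalS k x : (PiS q g k.+1).[x] =
  (PiS q g k).[x] ^+ q - (PiS q g k).[g k.+2] ^+ (q - 1) * (PiS q g k).[x].
Proof. by rewrite /= horner_comp !hornerE. Qed.

Lemma PiS_eval0 x : (PiS q g 0).[x] = x ^+ q - g 1 ^+ (q - 1) * x.
Proof. by rewrite /= !hornerE. Qed.

Lemma PiS_qlin k : qlin (horner (PiS q g k)).
Proof.
elim: k => [|k IH].
  apply: (qlin_ext (g := fun x => x ^+ q - g 1 ^+ (q - 1) * x)); first exact: PiS_eval0.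
  exact: qlinB qlin_frob (qlinZ _ qlin_id).
apply: (qlin_ext (g := fun x => (fun y => y ^+ q - (PiS q g k).[g k.+2] ^+ (q - 1) * y)
                                 ((PiS q g k).[x]))); first exact: PiS_evalS.
apply: (qlin_comp (f := fun y => y ^+ q - (PiS q g k).[g k.+2] ^+ (q - 1) * y) _ IH).
exact: qlinB qlin_frob (qlinZ _ qlin_id).
Qed.

Lemma PiS_polyS k : PiS q g k.+1 =
  (PiS q g k) ^+ q - ((PiS q g k).[g k.+2] ^+ (q - 1))%:P * PiS q g k.
Proof. by rewrite /= comp_polyB comp_Xn_poly comp_polyM comp_polyC comp_polyX. Qed.

Lemma monic_sub (P Q : {poly L}) : P \is monic -> (size Q < size P)%N ->
  (P - Q) \is monic /\ size (P - Q) = size P.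
Proof.
move=> mP hs; have hs' : (size (- Q) < size P)%N by rewrite size_polyN.
by rewrite monicE lead_coefDl // -monicE size_polyDl.
Qed.

Lemma size_CM (c : L) (P : {poly L}) : (size (c%:P * P)%R <= size P)%N.
Proof. by rewrite mul_polyC size_scale_leq. Qed.

Lemma PiS_size k : PiS q g k \is monic /\ size (PiS q g k) = (q ^ k.+1).+1.
Proof.
elim: k => [|k [mP sP]].
  rewrite /= expn1.
  have h2 : (size ((g 1 ^+ (q - 1))%:P * 'X)%R < size ('X^q : {poly L}))%N.
    by rewrite size_polyXn (leq_ltn_trans (size_CM _ _)) // size_polyX.
  have mX : ('X^q : {poly L}) \is monic by apply: monicXn.
  by have [-> ->] := monic_sub mX h2; rewrite size_polyXn.
rewrite PiS_polyS.
have mPq : PiS q g k ^+ q \is monic by apply: monic_exp.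
have sPq : size (PiS q g k ^+ q) = (q ^ k.+2).+1.
  have := size_exp (PiS q g k) q; rewrite sP /= -expnSr.
  have : size (PiS q g k ^+ q) != 0%N by rewrite size_poly_eq0 monic_neq0.
  by case: (size (PiS q g k ^+ q)) => [|z] // _ /= ->.
have hQ : (size (((PiS q g k).[g k.+2] ^+ (q - 1))%:P * PiS q g k)%R
            < size (PiS q g k ^+ q))%N.
  by rewrite sPq (leq_ltn_trans (size_CM _ _)) // sP ltnS ltn_exp2l.
by have [-> ->] := monic_sub mPq hQ; rewrite sPq.
Qed.

Lemma qm1 (x : L) : x ^+ (q - 1) * x = x ^+ q.
Proof. by rewrite -exprSr subn1 prednK // q_gt0. Qed.

Lemma PiS_root k j : (1 <= j <= k.+1)%N -> (PiS q g k).[g j] = 0.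
Proof.
elim: k j => [|k IH] j.
  move=> /andP[h1 h2]; have -> : j = 1%N by lia.
  by rewrite PiS_eval0 qm1 subrr.
move=> /andP[h1 h2]; rewrite PiS_evalS.
have [hj|hj] := leqP j k.+1.
  by rewrite IH ?h1 // frob0 mulr0 subrr.
have -> : j = k.+2 by lia.
by rewrite qm1 subrr.
Qed.

Lemma PiS_ann k : (k < n)%N ->
  PiS q g k = annihilator (Fq_span q (fun j : 'I_k.+1 => g j.+1)).
Proof.
move=> hk; have [mP sP] := PiS_size k.
apply: annihilatorE => //; first exact: indep_prefix.
  exact: PiS_qlin.
by move=> j; apply: PiS_root; rewrite /= ltn_ord.
Qed.

Lemma notin_span i : (i < n)%N -> g i.+1 \notin Fq_span q (fun j : 'I_i => g j.+1).
Proof.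
move=> hi; apply/negP; rewrite inE => /existsP [c /andP[/forallP hc /eqP he]].
have hind' := indep_prefix hi.
pose c' := fun j : 'I_i.+1 => if unlift ord_max j is Some j' then c j' else -1.
have := hind' c' _ _ ord_max; rewrite /c' unlift_none => H.
have : (-1 : L) = 0.
  apply: H.
    by move=> j; case: unlift => [a|]; [exact/eqP/hc | exact: frobN1].
  rewrite big_ord_recr /= unlift_none.
  have ew : forall j : 'I_i, unlift ord_max (widen_ord (leqnSn i) j) = Some j.
    move=> j; have -> : widen_ord (leqnSn i) j = lift ord_max j by apply: val_inj; rewrite /= /bump; have := ltn_ord j; lia.
    by rewrite liftK.
  under eq_bigr do rewrite ew.
  by rewrite -he mulN1r subrr.
by move/eqP; rewrite oppr_eq0 oner_eq0.
Qed.

Lemma PiS_nz k : (k.+1 < n)%N -> (PiS q g k).[g k.+2] != 0.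
Proof.
move=> hk; rewrite -rootE PiS_ann ?(ltnW hk) // /annihilator -big_enum.
by rewrite root_prod_XsubC mem_enum; apply: notin_span.
Qed.

Lemma g1_nz : (0 < n)%N -> g 1 != 0.
Proof.
move=> hn; apply: contraNneq (notin_span hn) => ->.
rewrite inE; apply/existsP; exists [ffun => 0].
by rewrite big_ord0 eqxx andbT; apply/forallP => -[].
Qed.

Lemma LamS_qlin k : qlin (horner (LamS q g r k)).
Proof.
elim: k => [|k IH].
  apply: (qlin_ext (g := fun x => (r 1 / g 1) * id x)); first by move=> x; rewrite /= !hornerE.
  exact: qlinZ qlin_id.
pose c := ((LamS q g r k).[g k.+2] - r k.+2) / (PiS q g k).[g k.+2].
apply: (qlin_ext (g := fun x => (LamS q g r k).[x] - c * (PiS q g k).[x])).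
  by move=> x; rewrite /= hornerD hornerN hornerCM.
exact: qlinB IH (qlinZ _ (PiS_qlin k)).
Qed.

Lemma LamS_size k : (size (LamS q g r k) <= (q ^ k).+1)%N.
Proof.
elim: k => [|k IH].
  by rewrite /= expn0; apply: leq_trans (size_CM _ _) _; rewrite size_polyX.
rewrite /=; apply: leq_trans (size_polyD _ _) _; rewrite size_polyN geq_max.
have [_ sP] := PiS_size k.
rewrite (leq_trans (size_CM _ _)) ?sP // andbT (leq_trans IH) // ltnS leq_exp2l //.
Qed.

Lemma LamS_val k j : (k < n)%N -> (j <= k)%N -> (LamS q g r k).[g j.+1] = r j.+1.
Proof.
elim: k j => [|k IH] j hk hj.
  have -> : j = 0%N by lia.
  by rewrite /= hornerCM hornerX divfK // g1_nz.
rewrite /= hornerD hornerN hornerCM.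
have [hjk|hjk] := leqP j k.
  rewrite IH ?(@PiS_root k j.+1) ?mulr0 ?subr0 //; lia.
have -> : j = k.+1 by lia.
by rewrite divfK ?PiS_nz // subKr.
Qed.

Lemma Lam_main k : (k < n)%N ->
  LamS q g r k = qLagrange q (fun j : 'I_k.+1 => g j.+1) (fun j : 'I_k.+1 => r j.+1).
Proof.
move=> hk; have hind := indep_prefix hk.
apply/eqP; rewrite -subr_eq0; apply/eqP; apply: (vanish hind).
- apply: (qlin_ext (g := fun x => (LamS q g r k).[x] -
      (linP k.+1 (lagc (fun j : 'I_k.+1 => g j.+1) (fun j => r j.+1))).[x])).
    by move=> x; rewrite hornerD hornerN qLagrangeE.
  exact: qlinB (LamS_qlin k) (linP_qlin _ _).
- apply: leq_trans (size_polyD _ _) _; rewrite size_polyN geq_max LamS_size.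
  by rewrite qLagrangeE linP_size.
- move=> j; rewrite hornerD hornerN qLagrange_val // LamS_val ?subrr //.
  by rewrite -ltnS.
Qed.

End Rec.

End Main.

Lemma dvd_XqX (L : finFieldType) (q j : nat) :
  ('X^q - 'X : {poly L}) %| 'X^(q ^ j) - 'X.
Proof.
elim: j => [|j IH]; first by rewrite expn0 expr1 subrr dvdp0.
have -> : ('X^(q ^ j.+1) - 'X : {poly L}) =
   (('X^q) ^+ (q ^ j) - 'X ^+ (q ^ j)) + ('X^(q ^ j) - 'X).
  by rewrite addrA subrK expnS exprM.
by rewrite dvdp_add // subrXX dvdp_mulr.
Qed.

Lemma card_Fq (L : finFieldType) (q m : nat) : (1 < q)%N -> #|L| = (q ^ m)%N ->
  #|[set x : L | x ^+ q == x]| = q.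
Proof.
move=> hq hL.
set P : {poly L} := 'X^q - 'X.
have sP : size P = q.+1.
  by rewrite /P size_polyDl size_polyXn // size_polyN size_polyX ltnS.
have rP : forall x, root P x = (x ^+ q == x).
  by move=> x; rewrite rootE /P !hornerE subr_eq0.
apply/eqP; rewrite eqn_leq; apply/andP; split.
  have nz : P != 0 by rewrite -size_poly_eq0 sP.
  have := max_poly_roots nz (rs := enum [set x : L | x ^+ q == x]).
  rewrite enum_uniq -cardE sP ltnS; apply => //.
  by apply/allP => x; rewrite mem_enum inE rP.
have hd : P %| \prod_(x : L) ('X - x%:P).
  by rewrite -finField_genPoly hL dvd_XqX.
have [msk hm] := dvdp_prod_XsubC hd.
have := eqp_size hm; rewrite sP size_prod_XsubC => -[e]; rewrite {1}e.
rewrite cardE; apply: uniq_leq_size; first exact/mask_uniq/index_enum_uniq.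
move=> x hx; rewrite mem_enum inE -rP (eqp_root hm) root_prod_XsubC.
exact: hx.
Qed.

Unset Implicit Arguments.

Theorem proposition5 (L : finFieldType) (q m n : nat) (g r : nat -> L) :
  (exists p k : nat, [/\ prime p, (0 < k)%N & q = (p ^ k)%N]) ->
  (0 < m)%N ->
  #|L| = (q ^ m)%N ->
  Fq_lin_indep q (fun j : 'I_n => g j.+1) ->
  forall i : nat, (1 <= i <= n)%N ->
    PiRec q g i = annihilator (Fq_span q (fun j : 'I_i => g j.+1)) /\
    LamRec q g r i = qLagrange q (fun j : 'I_i => g j.+1) (fun j : 'I_i => r j.+1).
Proof.
move=> [p [k [pp kp qE]]] mp hL hind i /andP[hi1 hin].
have q_gt1 : (1 < q)%N.
  rewrite qE; apply: (leq_trans (prime_gt1 pp)); rewrite -{1}(expn1 p) leq_exp2l //.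
  exact: prime_gt1.
have pch : p \in [pchar L].
  by apply: (card_finPcharP (n := (k * m)%N)) => //; rewrite hL qE expnM.
have frobD : forall x y : L, (x + y) ^+ q = x ^+ q + y ^+ q.
  move=> x y; apply: exprDn_pchar.
  by rewrite (eq_pnat _ (pcharf_eq pch)) qE pnatX pnat_id.
have cF := card_Fq q_gt1 hL.
case: i hi1 hin => // i _ hin.
rewrite /PiRec /LamRec /=.
split; first exact: (PiS_ann q_gt1 frobD cF hind).
exact: (Lam_main q_gt1 frobD cF r hind).
Qed.
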